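(* Let $G=(V,E)$ be a nontrivial graph of order $n$ with $\tau(G)=\tau>\frac{n}{2}$, and suppose its $\tau$-set $W$ satisfies $G[W]\cong K_\tau$. Then: (a) if $G$ contains a $W$-distinguishing vertex, then $\beta_p(G)=\tau+1$; (b) if the induced subgraph $G[N(W)\setminus W]$ has an isolated vertex, then $\beta_p(G)=\tau+1$; (c) if $|N(W)\setminus W|=1$, then $\beta_p(G)=\tau+1$; (d) if $G[N(W)\setminus W]$ contains a universal vertex $v$ (adjacent to all other vertices of $N(W)\setminus W$), then $v$ is adjacent to at least one vertex of $V\setminus N[W]$.
   Context: All graphs are finite, simple, undirected and connected. $N(W)=\bigcup_{v\in W}N(v)$, $N[W]=N(W)\cup W$. Two vertices $u,v$ are twins if $N(u)\setminus\{v\}=N(v)\setminus\{u\}$; the twin number $\tau(G)$ is the maximum cardinality of an equivalence class of the twin relation; a $\tau$-set is a set of pairwise twin vertices of cardinality $\tau(G)$. Given a $\tau$-set $W$ with $G[W]$ complete, a vertex $v\in V\setminus W$ is $W$-distinguishing if $d(v,z)\ne d(v,W)$ for every $z\in N(W)\setminus W$, where $d(v,W)=\min_{w\in W}d(v,w)$. For a partition $\Pi=\{S_1,\dots,S_k\}$ of $V$, $r(u|\Pi)=(d(u,S_1),\dots,d(u,S_k))$; $\Pi$ is locating if $r(u|\Pi)\ne r(v|\Pi)$ for all distinct $u,v$; $\beta_p(G)$ is the minimum size of a locating partition. *)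

(* Defs.v *)
(* finite simple connected graphs as a symmetric irreflexive
   relation e on a finType T. *)
From mathcomp Require Import all_boot.
Set Implicit Arguments. Unset Strict Implicit. Unset Printing Implicit Defensive.

Section Graph.
Variables (T : finType) (e : rel T).

Definition nbh (v : T) : {set T} := [set u | e v u].
Definition nbhS (W : {set T}) : {set T} := \bigcup_(v in W) nbh v.
Definition cnbhS (W : {set T}) : {set T} := nbhS W :|: W.

Fixpoint ball (k : nat) (u : T) : {set T} :=
  if k is k'.+1 then cnbhS (ball k' u) else [set u].

(* graph distance (correct for connected graphs, where it is < #|T|) *)
Definition dist (u v : T) : nat :=
  \big[minn/#|T|]_(k < #|T| | v \in ball k u) k.

Definition dset (v : T) (S : {set T}) : nat :=
  \big[minn/#|T|]_(w in S) dist v w.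

Definition twin (u v : T) : bool := nbh u :\ v == nbh v :\ u.

Definition twin_number : nat := \max_(x : T) #|[set y | twin x y]|.

Definition tau_set (W : {set T}) : Prop :=
  (forall u v, u \in W -> v \in W -> twin u v) /\ #|W| = twin_number.

Definition complete_on (W : {set T}) : Prop :=
  forall u v, u \in W -> v \in W -> u != v -> e u v.

Definition W_distinguishing (W : {set T}) (v : T) : Prop :=
  v \notin W /\ forall z, z \in nbhS W :\: W -> dist v z <> dset v W.

(* locating partition: partition of V (finset's [partition], blocks nonempty);
   the representation vectors differ iff some block is at different distance. *)
Definition locating_partition (P : {set {set T}}) : Prop :=
  partition P [set: T] /\
  forall u v, u != v -> exists2 S, S \in P & dset u S <> dset v S.

Definition partition_dim_is (k : nat) : Prop :=
  (exists2 P, locating_partition P & #|P| = k) /\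
  (forall P, locating_partition P -> k <= #|P|).

End Graph.

(* Main.v *)
Require Import Defs.
From mathcomp Require Import all_boot zify.
Set Implicit Arguments. Unset Strict Implicit. Unset Printing Implicit Defensive.

Lemma big_minn_le (I : eqType) (r : seq I) (P : pred I) (F : I -> nat) m i :
  i \in r -> P i -> \big[minn/m]_(j <- r | P j) F j <= F i.
Proof.
elim: r => [//|a r IH]; rewrite inE big_cons => /orP[/eqP<- ->|ir Pi].
  exact: geq_minl.
case: (P a); last exact: IH.
by rewrite geq_min IH ?orbT.
Qed.

Lemma big_minn_ge (I : Type) (r : seq I) (P : pred I) (F : I -> nat) m b :
  b <= m -> (forall i, P i -> b <= F i) -> b <= \big[minn/m]_(j <- r | P j) F j.
Proof.
move=> bm H; apply: (big_ind (fun x => b <= x)) => // x y bx hy.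
by rewrite leq_min bx hy.
Qed.

Lemma big_minn_att (I : Type) (r : seq I) (P : pred I) (F : I -> nat) m :
  \big[minn/m]_(j <- r | P j) F j = m \/
  exists2 i, P i & \big[minn/m]_(j <- r | P j) F j = F i.
Proof.
apply: (big_ind (fun x => x = m \/ exists2 i, P i & x = F i)); first by left.
  move=> x y Hx Hy; rewrite /minn; case: ifP => _; [exact: Hx|exact: Hy].
by move=> i Pi; right; exists i.
Qed.


Lemma ball_self (T : finType) (e : rel T) k u : u \in ball e k u.
Proof. elim: k => [|k IH] /=; first by rewrite inE. by rewrite /cnbhS inE IH orbT. Qed.

Lemma ballS (T : finType) (e : rel T) k u v :
  (v \in ball e k.+1 u) = (v \in ball e k u) || [exists z in ball e k u, e z v].
Proof.
rewrite /= /cnbhS inE orbC; congr (_ || _).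
apply/bigcupP/existsP => [[z zin]|[z /andP[zin ezv]]].
  by rewrite inE => ezv; exists z; rewrite zin.
by exists z; rewrite // inE.
Qed.

Lemma ball_mono (T : finType) (e : rel T) k u v :
  v \in ball e k u -> v \in ball e k.+1 u.
Proof. by rewrite ballS => ->. Qed.

Lemma ball_step (T : finType) (e : rel T) k u v y :
  v \in ball e k u -> e v y -> y \in ball e k.+1 u.
Proof. by move=> vin evy; rewrite ballS; apply/orP; right; apply/existsP; exists v; rewrite vin. Qed.

Lemma ball_L (T : finType) (e : rel T) k u z v :
  e u z -> v \in ball e k z -> v \in ball e k.+1 u.
Proof.
move=> euz; elim: k v => [|k IH] v.
  move=> H; have/eqP-> : v == z by move: H; rewrite /= inE.
  exact: (ball_step (ball_self _ _ _) euz).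
rewrite ballS => /orP[/IH/ball_mono //|/existsP[y /andP[yin eyv]]].
exact: (ball_step (IH _ yin) eyv).
Qed.

Lemma ball_sym (T : finType) (e : rel T) (e_sym : symmetric e) k u v :
  v \in ball e k u -> u \in ball e k v.
Proof.
elim: k u v => [|k IH] u v.
  by rewrite /= !inE => /eqP->.
rewrite ballS => /orP[/IH/ball_mono //|/existsP[z /andP[zin ezv]]].
by apply: (ball_L (z:=z)); [rewrite e_sym|exact: IH].
Qed.

Lemma dist_sym (T : finType) (e : rel T) (e_sym : symmetric e) u v :
  dist e u v = dist e v u.
Proof.
by rewrite /dist; apply: eq_bigl => k; apply/idP/idP; apply: ball_sym.
Qed.

Lemma dist_le (T : finType) (e : rel T) u v : dist e u v <= #|T|.
Proof.
rewrite /dist; apply: (big_ind (fun x => x <= #|T|)) => //.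
  by move=> x y hx _; rewrite geq_min hx.
by move=> i _; apply: ltnW.
Qed.

Lemma dist_att (T : finType) (e : rel T) u v :
  dist e u v = #|T| \/ exists2 k : nat, v \in ball e k u & dist e u v = k.
Proof.
case: (big_minn_att (index_enum 'I_#|T|) (fun k : 'I_#|T| => v \in ball e k u)
   (fun k : 'I_#|T| => nat_of_ord k) #|T|) => [H|[k kin H]]; [left|right].
  exact: H.
by exists k.
Qed.

Lemma dist_ub (T : finType) (e : rel T) u v k :
  k < #|T| -> v \in ball e k u -> dist e u v <= k.
Proof.
move=> kT vin; rewrite /dist.
have := @big_minn_le _ (index_enum 'I_#|T|) (fun k : 'I_#|T| => v \in ball e k u)
   (fun k : 'I_#|T| => nat_of_ord k) #|T| (Ordinal kT) (mem_index_enum _) vin.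
by [].
Qed.

Lemma dist_self (T : finType) (e : rel T) u : dist e u u = 0.
Proof.
have T0 : 0 < #|T| by apply/card_gt0P; exists u.
by apply/eqP; rewrite -leqn0; apply: (dist_ub T0); rewrite /= inE.
Qed.

Lemma dist0 (T : finType) (e : rel T) u v : dist e u v = 0 -> v = u.
Proof.
have T0 : 0 < #|T| by apply/card_gt0P; exists u.
case: (dist_att e u v) => [->|[k kin ->]]; first by move=> H; rewrite H in T0.
by move=> k0; move: kin; rewrite k0 /= inE => /eqP.
Qed.

Lemma dist1 (T : finType) (e : rel T) (e_irr : irreflexive e) u v :
  1 < #|T| -> e u v -> dist e u v = 1.
Proof.
move=> T1 euv; apply/eqP; rewrite eqn_leq; apply/andP; split.
  by apply: (dist_ub T1); apply: (ball_step (ball_self _ _ _) euv).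
rewrite lt0n; apply/eqP => /dist0 vu; by rewrite vu e_irr in euv.
Qed.

Lemma dist1E (T : finType) (e : rel T) u v :
  1 < #|T| -> dist e u v = 1 -> e u v.
Proof.
move=> T1; case: (dist_att e u v) => [->|[k kin dk]]; first by move=> H; rewrite H in T1.
move=> d1; move: kin; rewrite -dk d1 ballS /= => /orP[|/existsP[z /andP[]]].
  by rewrite inE => /eqP vu; move: d1; rewrite vu dist_self.
by rewrite inE => /eqP->.
Qed.

Lemma twin_sym (T : finType) (e : rel T) u v : twin e u v -> twin e v u.
Proof. by rewrite /twin eq_sym. Qed.

Lemma twin_adj (T : finType) (e : rel T) (e_sym : symmetric e) a b c :
  twin e a b -> e a c -> c != b -> e b c.
Proof.
rewrite /twin => /eqP H eac cb.
have : c \in nbh e a :\ b by rewrite !inE cb.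
by rewrite H !inE => /andP[_].
Qed.

Lemma ball_twin (T : finType) (e : rel T) (e_sym : symmetric e) (e_irr : irreflexive e)
   w w' x k : twin e w w' -> x != w -> w \in ball e k x -> w' \in ball e k x.
Proof.
move=> tw xw; elim: k => [|k IH].
  by rewrite /= inE => /eqP wx; rewrite wx eqxx in xw.
rewrite ballS => /orP[/IH/ball_mono //|/existsP[y /andP[yin eyw]]].
case: (eqVneq y w') => [<-|yw']; first exact: ball_mono.
apply: (ball_step yin); rewrite e_sym; apply: (twin_adj e_sym tw) => //.
by rewrite e_sym.
Qed.

Lemma dist_twin (T : finType) (e : rel T) (e_sym : symmetric e) (e_irr : irreflexive e)
   w w' x : twin e w w' -> x != w -> x != w' -> dist e x w = dist e x w'.
Proof.
move=> tw xw xw'; rewrite /dist; apply: eq_bigl => k; apply/idP/idP.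
  exact: ball_twin.
by apply: ball_twin => //; apply: twin_sym.
Qed.

Lemma dset_le (T : finType) (e : rel T) u (S : {set T}) w :
  w \in S -> dset e u S <= dist e u w.
Proof.
move=> wS; rewrite /dset.
exact: (@big_minn_le _ (index_enum T) (fun w => w \in S) (fun w => dist e u w) #|T| w (mem_index_enum _) wS).
Qed.

Lemma dset_const (T : finType) (e : rel T) u (S : {set T}) c a :
  a \in S -> (forall w, w \in S -> dist e u w = c) -> dset e u S = c.
Proof.
move=> aS H; apply/eqP; rewrite eqn_leq; apply/andP; split.
  by rewrite -(H a aS); apply: dset_le.
rewrite /dset; apply: big_minn_ge => [|w wS]; last by rewrite H.
by rewrite -(H a aS); apply: dist_le.
Qed.

Lemma dset1 (T : finType) (e : rel T) u a : dset e u [set a] = dist e u a.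
Proof. by apply: (dset_const (a := a)) => [|w]; rewrite inE // => /eqP->. Qed.

Lemma dset0 (T : finType) (e : rel T) u (S : {set T}) : (dset e u S == 0) = (u \in S).
Proof.
apply/eqP/idP => [|uS]; last by apply/eqP; rewrite -leqn0 -(dist_self e u) dset_le.
have T0 : 0 < #|T| by apply/card_gt0P; exists u.
rewrite /dset; case: (big_minn_att (index_enum T) (fun w => w \in S) (fun w => dist e u w) #|T|)
  => [->|[w wS ->]]; first by move=> H; rewrite H in T0.
by move/dist0 => wu; rewrite -wu.
Qed.

Lemma adjW (T : finType) (e : rel T) (e_sym : symmetric e) (W : {set T})
  (twW : forall u v, u \in W -> v \in W -> twin e u v) x w :
  x \in nbhS e W -> x \notin W -> w \in W -> e w x.
Proof.
move=> /bigcupP[w0 w0W]; rewrite inE => ew0x xW wW.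
case: (eqVneq w0 w) => [<-//|w0w].
apply: (twin_adj e_sym (twW _ _ w0W wW) ew0x).
by apply: contraNneq xW => ->.
Qed.

Lemma dset_W (T : finType) (e : rel T) (e_sym : symmetric e) (e_irr : irreflexive e)
  (W : {set T}) (twW : forall u v, u \in W -> v \in W -> twin e u v) v w :
  v \notin W -> w \in W -> dset e v W = dist e v w.
Proof.
move=> vW wW; apply: (dset_const (a := w)) => // w' w'W.
apply: dist_twin => //; first exact: twW.
  by apply: contraNneq vW => ->.
by apply: contraNneq vW => ->.
Qed.

Lemma lower (T : finType) (e : rel T) (e_sym : symmetric e) (e_irr : irreflexive e)
  (nontriv : 1 < #|T|) (W : {set T})
  (twW : forall u v, u \in W -> v \in W -> twin e u v) (hWc : complete_on e W)
  x (xN : x \in nbhS e W) (xW : x \notin W) P (hP : locating_partition e P) :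
  #|W| < #|P|.
Proof.
case: hP => partP loc; case/and3P: partP => /eqP cov triv _.
have pb u : pblock P u \in P by apply: pblock_mem; rewrite cov inE.
have upb u : u \in pblock P u by rewrite mem_pblock cov inE.
have inj : {in W &, injective (pblock P)}.
  move=> w w' wW w'W eq; apply/eqP; apply/negP => /negP ww'.
  case: (loc w w' ww') => S SP; apply.
  case: (boolP (w \in S)) => wS.
    have Se : S = pblock P w by symmetry; apply: def_pblock.
    have w'S : w' \in S by rewrite Se eq.
    by move: wS w'S; rewrite -!(dset0 e) => /eqP-> /eqP->.
  case: (boolP (w' \in S)) => w'S.
    have Se : S = pblock P w' by symmetry; apply: def_pblock.
    by move: wS; rewrite Se -eq upb.
  rewrite /dset; apply: eq_bigr => y yS.
  have yw : y != w by apply: contraNneq wS => <-.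
  have yw' : y != w' by apply: contraNneq w'S => <-.
  rewrite (dist_sym e_sym) (dist_twin e_sym e_irr (twW _ _ wW w'W) yw yw').
  exact: dist_sym.
rewrite ltnNge; apply/negP => Ple.
have imP : pblock P @: W = P.
  apply/eqP; rewrite eqEcard card_in_imset // Ple andbT.
  by apply/subsetP => S /imsetP[w _ ->].
have : pblock P x \in pblock P @: W by rewrite imP.
case/imsetP => w wW pxw.
have xw : x != w by apply: contraNneq xW => ->.
case: (loc x w xw) => S SP; apply.
have : S \in pblock P @: W by rewrite imP.
case/imsetP => w' w'W Se.
case: (eqVneq w' w) => [ew|w'w].
  have xS : x \in S by rewrite Se ew -pxw.
  have wS : w \in S by rewrite Se ew.
  by move: xS wS; rewrite -!(dset0 e) => /eqP-> /eqP->.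
have xS : x \notin S.
  apply/negP => xS; have : pblock P x = S by apply: def_pblock => //; rewrite Se.
  by rewrite pxw Se => /inj => /(_ wW w'W) ew; rewrite ew eqxx in w'w.
have wS : w \notin S.
  apply/negP => wS; have : pblock P w = S by apply: def_pblock => //; rewrite Se.
  by rewrite Se => /inj => /(_ wW w'W) ew; rewrite ew eqxx in w'w.
have d1 y : y \notin S -> e y w' -> dset e y S = 1.
  move=> yS eyw; apply/eqP; rewrite eqn_leq; apply/andP; split.
    by rewrite -(dist1 e_irr nontriv eyw); apply: dset_le; rewrite Se upb.
  by rewrite lt0n dset0.
rewrite (d1 _ xS); last by rewrite e_sym; apply: (adjW e_sym twW).
rewrite (d1 _ wS) //; apply: hWc => //; by rewrite eq_sym.
Qed.

Lemma upper (T : finType) (e : rel T) (e_sym : symmetric e) (e_irr : irreflexive e)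
  (nontriv : 1 < #|T|) (W : {set T})
  (twW : forall u v, u \in W -> v \in W -> twin e u v) (hWc : complete_on e W)
  (tau_big : #|T| < 2 * #|W|) v (vW : v \notin W)
  (hv : forall z, z \in nbhS e W :\: W -> dist e v z <> dset e v W) :
  exists2 P, locating_partition e P & #|P| = #|W|.+1.
Proof.
pose X := [set y | (y \notin W) && (y != v)].
have XE y : (y \in X) = (y \notin W) && (y != v) by rewrite inE.
have cardX : #|X| < #|W|.
  have h1 : #|~: W| = (v \in ~: W) + #|~: W :\ v| by apply: cardsD1.
  have h2 : ~: W :\ v = X by apply/setP => y; rewrite !inE andbC.
  have h3 : v \in ~: W by rewrite inE.
  rewrite h2 h3 /= in h1; have := cardsC W; lia.
pose sw := enum W; pose sx := enum X.
have szw : size sw = #|W| by rewrite /sw cardE.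
have szx : size sx = #|X| by rewrite /sx cardE.
pose g y := if y \in W then y else if y == v then v else nth v sw (index y sx).
have gW y : y \in W -> g y = y by rewrite /g => ->.
have gv : g v = v by rewrite /g (negbTE vW) eqxx.
have gX y : y \in X -> g y = nth v sw (index y sx).
  by rewrite XE /g => /andP[/negbTE-> /negbTE->].
have ixlt y : y \in X -> index y sx < size sw.
  by move=> yX; rewrite szw; apply: (leq_trans _ (ltnW cardX)); rewrite -szx index_mem mem_enum.
have gXW y : y \in X -> g y \in W.
  by move=> yX; rewrite gX // -(mem_enum W) mem_nth // ixlt.
have ginj : {in X &, injective g}.
  move=> y y' yX y'X; rewrite !gX // => /eqP; rewrite nth_uniq ?ixlt ?enum_uniq // => /eqP eqi.
  by rewrite -(nth_index v (x := y) (s := sx)) ?mem_enum // eqi nth_index ?mem_enum.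
have [w1 w1W w1X] : exists2 w1, w1 \in W & forall y, y \in X -> g y != w1.
  case: (boolP (W \subset g @: X)) => [sub|].
    have := subset_leq_card sub; have := leq_imset_card g X; lia.
  case/subsetPn => w1 w1W w1n; exists w1 => // y yX.
  by apply: contraNneq w1n => <-; apply: imset_f.
pose P := preim_partition g [set: T].
pose B y := [set z in [set: T] | g y == g z].
have BP y : B y \in P by apply: imset_f; rewrite inE.
have Bin y z : (z \in B y) = (g y == g z) by rewrite !inE.
have gneq z : z \notin W -> z != v -> g z != v.
  move=> zW zv; apply: contraNneq vW => <-; apply: gXW; by rewrite XE zW.
have Bv : B v = [set v].
  apply/setP => z; rewrite Bin inE gv; apply/idP/idP => [/eqP vz|/eqP->]; last by rewrite gv.
  case: (boolP (z \in W)) => zW; first by move: vz; rewrite gW // => vz; rewrite vz zW in vW.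
  case: (eqVneq z v) => // zv; by move: (gneq z zW zv); rewrite -vz eqxx.
have Bw1 : B w1 = [set w1].
  apply/setP => z; rewrite Bin inE gW //; apply/idP/idP => [/eqP wz|/eqP->]; last by rewrite gW.
  case: (boolP (z \in W)) => zW; first by rewrite -(gW z zW) -wz.
  case: (eqVneq z v) => zv; first by move: wz; rewrite zv gv => wv; rewrite -wv w1W in vW.
  by have := w1X z; rewrite XE zW zv wz eqxx => /(_ isT).
have key w x : w \in W -> x \in X -> g x = w -> exists2 S, S \in P & dset e w S <> dset e x S.
  move=> wW xX gxw; move: (xX); rewrite XE => /andP[xW xv].
  case: (boolP (x \in nbhS e W)) => xN.
    exists (B v); first exact: BP.
    rewrite Bv !dset1 (dist_sym e_sym w) (dist_sym e_sym x) -(dset_W e_sym e_irr twW vW wW).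
    by move=> H; apply: (hv x); rewrite ?inE ?xN ?xW // H.
  exists (B w1); first exact: BP.
  have ww1 : w != w1 by rewrite -gxw; apply: w1X.
  rewrite Bw1 !dset1 (dist1 e_irr nontriv (hWc _ _ wW w1W ww1)).
  move/esym/(dist1E nontriv) => exw1; case/negP: xN; apply/bigcupP; exists w1 => //.
  by rewrite inE e_sym.
exists P.
  split; first exact: preim_partitionP.
  move=> u u' uu'; case: (eqVneq (g u) (g u')) => guu; last first.
    exists (B u); first exact: BP.
    have h1 : dset e u (B u) = 0 by apply/eqP; rewrite dset0 Bin.
    have h2 : dset e u' (B u) != 0 by rewrite dset0 Bin.
    by move=> H; move: h2; rewrite -H h1.
  have sw' : forall a b, a != b -> g a = g b -> a \in W -> exists2 S, S \in P & dset e a S <> dset e b S.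
    move=> a b ab gab aW; case: (boolP (b \in W)) => bW.
      by move: gab; rewrite !gW // => abe; rewrite abe eqxx in ab.
    case: (eqVneq b v) => bv.
      by move: gab; rewrite bv gv gW // => av; rewrite -av aW in vW.
    by apply: key => //; [rewrite XE bW bv | rewrite -gab gW].
  case: (boolP (u \in W)) => uW; first exact: sw'.
  case: (boolP (u' \in W)) => u'W.
    have [S SP H] := sw' u' u (ltac:(by rewrite eq_sym)) (esym guu) u'W.
    by exists S => // H'; apply: H.
  case: (eqVneq u v) => uv.
    have u'v : u' != v by rewrite -uv eq_sym.
    by move: guu; rewrite uv gv => /esym/eqP; rewrite (negbTE (gneq _ u'W u'v)).
  case: (eqVneq u' v) => u'v.
    by move: guu; rewrite u'v gv => /eqP; rewrite (negbTE (gneq _ uW uv)).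
  by move: (ginj u u'); rewrite !XE uW uv u'W u'v => /(_ isT isT guu) ue; rewrite ue eqxx in uu'.
pose k (z : T) := [set z' in [set: T] | z == g z'].
have -> : P = k @: (g @: [set: T]).
  by rewrite -imset_comp.
rewrite card_in_imset.
  have -> : g @: [set: T] = v |: W.
    apply/setP => z; rewrite !inE; apply/imsetP/idP => [[y _ ->]|].
      case: (boolP (y \in W)) => yW; first by rewrite gW // yW orbT.
      case: (eqVneq y v) => yv; first by rewrite yv gv eqxx.
      by rewrite gXW ?orbT // XE yW yv.
    case/orP => [/eqP->|zW]; first by exists v; rewrite ?inE ?gv.
    by exists z; rewrite ?inE ?gW.
  by rewrite cardsU1 vW.
move=> z z' /imsetP[a _ ->] /imsetP[b _ ->] /setP kab.
by have := kab a; rewrite !inE eqxx => /esym/eqP.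
Qed.

Lemma exitW (T : finType) (e : rel T) (W : {set T}) a p :
  a \in W -> path e a p -> last a p \notin W ->
  exists2 b, b \in nbhS e W & b \notin W.
Proof.
elim: p a => [|c p IH] a aW /=; first by rewrite aW.
case/andP => eac pth lst.
case: (boolP (c \in W)) => cW; first exact: (IH c cW pth lst).
by exists c => //; apply/bigcupP; exists a; rewrite ?inE.
Qed.

Lemma partA (T : finType) (e : rel T) (e_sym : symmetric e) (e_irr : irreflexive e)
  (e_conn : forall u v : T, connect e u v)
  (nontriv : 1 < #|T|) (W : {set T})
  (twW : forall u v, u \in W -> v \in W -> twin e u v) (hWc : complete_on e W)
  (tau_big : #|T| < 2 * #|W|) v (vW : v \notin W)
  (hv : forall z, z \in nbhS e W :\: W -> dist e v z <> dset e v W) :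
  partition_dim_is e #|W|.+1.
Proof.
split; first exact: (upper e_sym e_irr nontriv twW hWc tau_big vW hv).
have [w wW] : exists w, w \in W.
  apply/set0Pn; apply: contraTneq tau_big => ->; rewrite cards0 muln0.
  by rewrite -leqNgt.
have [p pth lst] := connectP (e_conn w v).
have [x xN xW] : exists2 x, x \in nbhS e W & x \notin W.
  by apply: (exitW wW pth); rewrite -lst.
move=> P hP; exact: (lower e_sym e_irr nontriv twW hWc xN xW hP).
Qed.

Unset Implicit Arguments.
Set Strict Implicit.
Theorem lemma24 (T : finType) (e : rel T)
  (e_sym : symmetric e) (e_irr : irreflexive e)
  (e_conn : forall u v : T, connect e u v)
  (nontriv : 1 < #|T|)
  (tau_big : #|T| < 2 * twin_number e)
  (W : {set T}) (hW : tau_set e W) (hWc : complete_on e W) :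
  let NW := nbhS e W :\: W in
  ((exists v, W_distinguishing e W v) ->
      partition_dim_is e (twin_number e).+1) /\
  ((exists2 x, x \in NW & forall y, y \in NW -> ~~ e x y) ->
      partition_dim_is e (twin_number e).+1) /\
  (#|NW| = 1 -> partition_dim_is e (twin_number e).+1) /\
  (forall v, v \in NW -> (forall y, y \in NW -> y != v -> e v y) ->
      exists2 u, u \notin cnbhS e W & e v u).
Proof.
move=> NW; case: hW => twW tauW.
rewrite -tauW in tau_big *.
have A : (exists v, W_distinguishing e W v) -> partition_dim_is e #|W|.+1.
  case=> v [vW hv]; exact: (partA e_sym e_irr e_conn nontriv twW hWc tau_big vW hv).
have B : (exists2 x, x \in NW & forall y, y \in NW -> ~~ e x y) -> partition_dim_is e #|W|.+1.
  case=> x xNW iso; apply: A; exists x.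
  move: (xNW); rewrite inE => /andP[xW xN]; split => // z zNW.
  have [w wW ewx] : exists2 w, w \in W & e w x.
    by case/bigcupP: xN => w wW; rewrite inE => ewx; exists w.
  rewrite (dset_W e_sym e_irr twW xW wW) (dist_sym e_sym x w) (dist1 e_irr nontriv ewx).
  case: (eqVneq z x) => [->|zx]; first by rewrite dist_self.
  by move/(dist1E nontriv); apply/negP; apply: iso.
split => //; split => //; split.
  move=> NW1; apply: B; have [a NWa] : exists a, NW = [set a].
    by apply/cards1P; rewrite NW1.
  exists a; first by rewrite NWa inE.
  by move=> y; rewrite NWa inE => /eqP->; rewrite e_irr.
move=> v vNW univ.
case: (pickP [pred u | (u \notin cnbhS e W) && e v u]) => [u /andP[un evu]|none].
  by exists u.
exfalso.
move: (vNW); rewrite inE => /andP[vW vN].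
have [w wW ewv] : exists2 w, w \in W & e w v.
  by case/bigcupP: vN => w wW; rewrite inE => ewv; exists w.
have twv : twin e w v.
  apply/eqP/setP => y; rewrite !inE; apply/idP/idP => /andP[yv ey].
    have yw : y != w by apply: contraTneq ey => ->; rewrite e_irr.
    rewrite yw /=.
    case: (boolP (y \in W)) => yW.
      rewrite e_sym; apply: (adjW e_sym twW vN vW yW).
    apply: univ => //; rewrite inE yW /=; apply/bigcupP; exists w; rewrite ?inE //.
  have yv2 : y != v by apply: contraTneq ey => ->; rewrite e_irr.
  rewrite yv2 /=.
  case: (boolP (y \in W)) => yW; first by apply: hWc; rewrite // eq_sym.
  have yc : y \in cnbhS e W.
    by move: (none y); rewrite /= ey andbT => /negbFE.
  move: yc; rewrite /cnbhS inE (negbTE yW) orbF => yN.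
  exact: (adjW e_sym twW yN yW wW).
have sub : v |: W \subset [set y | twin e w y].
  apply/subsetP => y; rewrite !inE => /orP[/eqP->|yW] //.
  exact: twW.
have := subset_leq_card sub; rewrite cardsU1 vW /= tauW.
have := @leq_bigmax T (fun x => #|[set y | twin e x y]|) w.
rewrite /twin_number; lia.
Qed.
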